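(* Let $k\geq 2$ be an integer and let $G=(V,E)$ be a graph. Let $X_1,X_2\subseteq V$. Let $\sim$ be a symmetric binary relation on $V^2$ such that (a) for every $(u,v)\in V^2$ and $w\in X_1$, $w$ has at most $\Delta_1$ neighbours $z\in X_2$, and at most $s_1$ of them satisfy $(u,v)\sim(z,w)$; (b) for every $(u,v)\in V^2$ and $w\in X_2$, $w$ has at most $\Delta_2$ neighbours $z\in X_1$, and at most $s_2$ of them satisfy $(u,v)\sim(z,w)$. Let $M=\max(\Delta_1s_2,\Delta_2s_1)$. Then the number of homomorphic $2k$-cycles $(x_1,\dots,x_{2k})\in(X_1\times X_2\times X_1\times\dots\times X_2)\cup(X_2\times X_1\times X_2\times\dots\times X_1)$ in $G$ such that $(x_i,x_{i+1})\sim(x_j,x_{j+1})$ for some $i\neq j$ is at most $$32k\left(kM\hom(C_{2k-2},G)\hom(C_{2k},G)\right)^{1/2}.$$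
   Context: A homomorphic $2k$-cycle in $G$ is a tuple $(x_1,\dots,x_{2k})\in V^{2k}$ with $x_ix_{i+1}\in E$ for all $i$, indices modulo $2k$ (so $x_{2k+1}=x_1$). $\hom(H,G)$ is the number of homomorphisms from $H$ to $G$. Convention: $C_2$ is a single edge, so $\hom(C_2,G)=2|E|$. *)

(* Defs.v *)
From mathcomp Require Import all_boot all_order all_algebra.
Set Implicit Arguments. Unset Strict Implicit. Unset Printing Implicit Defensive.
Import Order.TTheory GRing.Theory Num.Theory.

Definition cyc_succ (n : nat) (i : 'I_n) : 'I_n := ordS i.

Definition is_hom_cycle (T : finType) (e : rel T) (n : nat) (x : {ffun 'I_n -> T}) : bool :=
  [forall i : 'I_n, e (x i) (x (cyc_succ i))].

(* hom(C_n, G) = number of homomorphic n-cycles (for n = 2 this is 2|E|) *)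
Definition hom_cycle (T : finType) (e : rel T) (n : nat) : nat :=
  #|[set x : {ffun 'I_n -> T} | is_hom_cycle e x]|.

Definition alternating (T : finType) (A B : {set T}) (n : nat) (x : {ffun 'I_n -> T}) : bool :=
  [forall i : 'I_n, x i \in (if odd i then B else A)].

Definition bad_cycles (T : finType) (e : rel T) (X1 X2 : {set T})
    (sim : T * T -> T * T -> bool) (n : nat) : {set {ffun 'I_n -> T}} :=
  [set x : {ffun 'I_n -> T} | [&& is_hom_cycle e x,
      alternating X1 X2 x || alternating X2 X1 x &
      [exists i : 'I_n, exists j : 'I_n,
         (i != j) && sim (x i, x (cyc_succ i)) (x j, x (cyc_succ j))]]].

(* Main.v *)
Require Import Defs.
From mathcomp Require Import all_boot all_order all_algebra.
From mathcomp Require Import ring zify.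
Import Order.TTheory GRing.Theory Num.Theory.

Module Aux.
Set Implicit Arguments. Unset Strict Implicit. Unset Printing Implicit Defensive.

Module A.

Section Cyc.
Variables (T : finType) (n : nat).
Hypothesis npos : (0 < n)%N.

Definition idx (t : nat) : 'I_n := Ordinal (ltn_pmod t npos).
Definition at_ (x : {ffun 'I_n -> T}) (t : nat) : T := x (idx t).
Definition mk (g : nat -> T) : {ffun 'I_n -> T} := [ffun i : 'I_n => g (val i)].

Lemma idx_val (i : 'I_n) : idx i = i.
Proof. by apply: val_inj; rewrite /= modn_small. Qed.

Lemma at_val x (i : 'I_n) : at_ x i = x i.
Proof. by rewrite /at_ idx_val. Qed.

Lemma at_eqmod x a b : a = b %[mod n] -> at_ x a = at_ x b.
Proof. by move=> h; rewrite /at_; congr (x _); apply: val_inj. Qed.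

Lemma at_mod x a : at_ x (a %% n) = at_ x a.
Proof. by apply: at_eqmod; rewrite modn_mod. Qed.

Lemma at_n x : at_ x n = at_ x 0.
Proof. by apply: at_eqmod; rewrite modnn mod0n. Qed.

Lemma at_mk g t : at_ (mk g) t = g (t %% n).
Proof. by rewrite /at_ /mk ffunE. Qed.

Lemma at_mk_lt g t : (t < n)%N -> at_ (mk g) t = g t.
Proof. by move=> h; rewrite at_mk modn_small. Qed.

Lemma ffun_at_eq x y : (forall t, (t < n)%N -> at_ x t = at_ y t) -> x = y.
Proof. by move=> h; apply/ffunP => i; rewrite -!at_val h. Qed.

Variable e : rel T.

Lemma homP x : reflect (forall t, e (at_ x t) (at_ x t.+1)) (is_hom_cycle e x).
Proof.
apply: (iffP forallP) => h.
  move=> t; have := h (idx t); rewrite /cyc_succ.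
  have -> : ordS (idx t) = idx t.+1.
    by apply: val_inj; rewrite /= -addn1 modnDml addn1.
  by rewrite /at_.
move=> i; have := h i; rewrite -!at_val; congr (e _ _).
by rewrite /cyc_succ /at_; congr (x _); apply: val_inj; rewrite /= modn_mod.
Qed.

Lemma hom_mk g : (forall t, (t.+1 < n)%N -> e (g t) (g t.+1)) ->
  e (g n.-1) (g 0) -> is_hom_cycle e (mk g).
Proof.
move=> h1 h2; apply/homP => t; rewrite !at_mk.
have <- : (t %% n).+1 %% n = t.+1 %% n by rewrite -addn1 modnDml addn1.
have lt := ltn_pmod t npos.
case: (ltnP (t %% n).+1 n) => h.
  rewrite (modn_small h); exact: h1.
have eq : (t %% n).+1 = n by apply/eqP; rewrite eqn_leq lt h.
have H : t %% n = n.-1 by rewrite -[in RHS]eq.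
by rewrite eq modnn H.
Qed.

Lemma alt_at A B x : ~~ odd n -> alternating A B x ->
  forall t, at_ x t \in (if odd t then B else A).
Proof.
move=> ev /forallP h t; have := h (idx t); rewrite /at_ /=.
by rewrite odd_mod //; apply/negbTE.
Qed.

Lemma at_succ (x : {ffun 'I_n -> T}) (i : 'I_n) : x (cyc_succ i) = at_ x i.+1.
Proof. by rewrite /at_; congr (x _); apply: val_inj. Qed.

Definition rot (i : nat) x := mk (fun t => at_ x (t + i)).

Lemma at_rot i x t : at_ (rot i x) t = at_ x (t + i).
Proof. by rewrite at_mk; apply: at_eqmod; rewrite modnDml. Qed.

Lemma rot_inj (i : 'I_n) : injective (rot i).
Proof.
move=> x y h; apply: ffun_at_eq => t _.
have := congr1 (fun z => at_ z (t + (n - i))) h; rewrite !at_rot.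
have -> : t + (n - i) + i = t + n by rewrite -addnA subnK // ltnW.
by rewrite !(@at_eqmod _ (t + n) t) // modnDr.
Qed.

End Cyc.

End A.
Import A.

Section CSsec.
Local Open Scope ring_scope.

Lemma prod_sums (R : comRingType) (I : finType) (a b : I -> R) :
  (\sum_i a i) * (\sum_j b j) = \sum_i \sum_j a i * b j.
Proof. by rewrite mulr_suml; apply: eq_bigr => i _; rewrite mulr_sumr. Qed.

Lemma CS (R : realDomainType) (I : finType) (u v : I -> R) :
  (\sum_i u i * v i) ^+ 2 <= (\sum_i u i ^+ 2) * (\sum_i v i ^+ 2).
Proof.
have H : 0 <= \sum_i \sum_j (u i * v j - u j * v i) ^+ 2.
  by apply: sumr_ge0 => i _; apply: sumr_ge0 => j _; apply: sqr_ge0.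
have E1 : forall i j, (u i * v j - u j * v i) ^+ 2 =
     u i ^+ 2 * v j ^+ 2 + v i ^+ 2 * u j ^+ 2 - (1 + 1) * ((u i * v i) * (u j * v j)).
  by move=> i j; rewrite sqrrB !exprMn; ring.
have E : \sum_i \sum_j (u i * v j - u j * v i) ^+ 2 =
  (\sum_i \sum_j u i ^+ 2 * v j ^+ 2) + (\sum_i \sum_j v i ^+ 2 * u j ^+ 2)
   - (\sum_i \sum_j (1 + 1) * ((u i * v i) * (u j * v j))).
  rewrite -big_split -sumrB; apply: eq_bigr => i _ /=.
  by rewrite -big_split -sumrB; apply: eq_bigr => j _; rewrite E1.
have E2 : \sum_i \sum_j (1 + 1) * ((u i * v i) * (u j * v j)) =
    (1 + 1) * ((\sum_i u i * v i) * (\sum_i u i * v i)) :> R.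
  by rewrite prod_sums mulr_sumr; apply: eq_bigr => i _; rewrite mulr_sumr.
move: H; rewrite E E2 -!prod_sums expr2 => H.
have : 0 <= (1 + 1) * ((\sum_i u i ^+ 2) * (\sum_i v i ^+ 2)
   - (\sum_i u i * v i) * (\sum_i u i * v i)).
  by move: H; rewrite [(\sum_i v i ^+ 2) * _]mulrC; congr (_ <= _); ring.
by rewrite pmulr_rge0 ?subr_ge0 // ltr_pwDl.
Qed.

End CSsec.


Lemma card_part (X K : finType) (S : {set X}) (f : X -> K) :
  #|S| = \sum_c #|[set x in S | f x == c]|.
Proof.
rewrite -sum1_card (partition_big f predT) //=; apply: eq_bigr => c _.
by rewrite -sum1_card; apply: eq_bigl => x; rewrite !inE.
Qed.

Lemma card_pairs (X K : finType) (S : {set X}) (f : X -> K) :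
  #|[set p in setX S S | f p.1 == f p.2]| = \sum_c #|[set x in S | f x == c]| ^ 2.
Proof.
rewrite (card_part _ (fun p => f p.1)); apply: eq_bigr => c _.
rewrite expnS expn1 -cardsX; apply: eq_card => [[a b]]; rewrite !inE /=.
by case: (f a =P c) => [->|]; rewrite ?andbT ?andbF // eq_sym !andbA.
Qed.

Lemma card_exists_le (X I : finType) (Q : I -> X -> bool) :
  (#|[set z | [exists t, Q t z]]| <= \sum_t #|[set z | Q t z]|)%N.
Proof.
rewrite -(sum1dep_card (fun z : X => [exists t : I, Q t z])) big_mkcond /=.
have E : forall t, #|[set z | Q t z]| = (\sum_z (if Q t z then 1 else 0))%N.
  by move=> t; rewrite -(sum1dep_card (fun z => Q t z)) big_mkcond.
rewrite (eq_bigr _ (fun t _ => E t)).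
rewrite exchange_big /=; apply: leq_sum => z _.
case: existsP => // [[t Ht]]; rewrite (bigD1 t) //= Ht; exact: leq_addr.
Qed.

Lemma card_pair_fib (X Y : finType) (P : X -> Y -> bool) :
  #|[set q : X * Y | P q.1 q.2]| = \sum_x #|[set y | P x y]|.
Proof.
transitivity (\sum_x \sum_y (if P x y then 1 else 0))%N; last first.
  apply: eq_bigr => x _; rewrite -(sum1dep_card (fun y => P x y)).
  by rewrite [RHS]big_mkcond.
rewrite (pair_bigA _ (fun x y => if P x y then 1 else 0)%N) /=.
rewrite -(sum1dep_card (fun q : X * Y => P q.1 q.2)).
by rewrite [LHS]big_mkcond.
Qed.


Section Main.
Variables (T : finType) (e : rel T) (Y1 Y2 : {set T})
  (sim : T * T -> T * T -> bool) (k : nat).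
Hypothesis k2 : (2 <= k)%N.
Hypothesis esym : symmetric e.
Hypothesis ssym : forall p q, sim p q = sim q p.

Local Notation n := (2 * k)%N.
Lemma npos : (0 < n)%N. Proof. lia. Qed.
Local Notation at_ := (at_ npos).
Local Notation F := {ffun 'I_n -> T}.

Definition Zs : {set F} := [set x : F | [&& is_hom_cycle e x, at_ x 0 \in Y1,
  at_ x 1 \in Y2 & [exists d : 'I_k, sim (at_ x 0, at_ x 1) (at_ x d.+1, at_ x d.+2)]]].

Lemma rot_Zs x (r d : nat) : (forall t, e (at_ x t) (at_ x t.+1)) ->
  at_ x r \in Y1 -> at_ x r.+1 \in Y2 -> (1 <= d <= k)%N ->
  sim (at_ x r, at_ x r.+1) (at_ x (d + r), at_ x (d + r).+1) ->
  A.rot npos r x \in Zs.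
Proof.
move=> hh h1 h2 hd hs; rewrite inE; apply/and4P; split.
- by apply/(homP npos) => t; rewrite !at_rot addSn.
- by rewrite at_rot add0n.
- by rewrite at_rot add1n.
- have hd' : (d.-1 < k)%N by lia.
  apply/existsP; exists (Ordinal hd'); rewrite /= !at_rot add0n add1n.
  have -> : (d.-1.+1 + r = d + r)%N by lia.
  by have -> : (d.-1.+2 + r = (d + r).+1)%N by lia.
Qed.

Definition kap (x : F) := (at_ x 0, at_ x 1, at_ x k.+1).
Definition aF (x : F) : F := @mk T n (fun t => if (t <= k.+1)%N then at_ x t else at_ x 0).
Definition bF (x : F) : F :=
  @mk T n (fun t => if (t <= 1)%N || (k.+1 <= t)%N then at_ x t else at_ x 0).

Lemma aF_lo x t : (t <= k.+1)%N -> at_ (aF x) t = at_ x t.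
Proof. by move=> h; rewrite at_mk_lt ?h //; lia. Qed.
Lemma aF_hi x t : (k.+1 < t < n)%N -> at_ (aF x) t = at_ (aF x) 0.
Proof.
move=> h; rewrite (@aF_lo x 0) // /aF at_mk_lt; last lia.
by case: ifP => //; lia.
Qed.
Lemma bF_ok x t : ((t <= 1) || (k.+1 <= t <= n))%N -> at_ (bF x) t = at_ x t.
Proof.
move=> h; case: (ltnP t n) => h2.
  by rewrite at_mk_lt // ifT //; lia.
have -> : t = n by lia.
by rewrite !at_n at_mk_lt //; lia.
Qed.
Lemma bF_mid x t : (1 < t <= k)%N -> at_ (bF x) t = at_ (bF x) 0.
Proof.
move=> h; rewrite (@bF_ok x 0) // at_mk_lt; last lia.
by case: ifP => //; lia.
Qed.
Lemma kap_aF x : kap (aF x) = kap x.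
Proof. by rewrite /kap !aF_lo //; lia. Qed.
Lemma kap_bF x : kap (bF x) = kap x.
Proof. by rewrite /kap !bF_ok //; apply/orP; (by left) || right; lia. Qed.


Lemma aFbF_inj x y : aF x = aF y -> bF x = bF y -> x = y.
Proof.
move=> ha hb; apply: (@ffun_at_eq _ _ npos) => t ht.
case: (leqP t k.+1) => h.
  by have := congr1 (fun z => at_ z t) ha; rewrite /= !aF_lo.
have h' : ((t <= 1) || (k.+1 <= t <= n))%N by apply/orP; right; lia.
by have := congr1 (fun z => at_ z t) hb; rewrite /= !bF_ok.
Qed.

Definition Ua := aF @: Zs.
Definition Vb := bF @: Zs.
Definition Uk c := [set a in Ua | kap a == c].
Definition Vk c := [set b in Vb | kap b == c].

Lemma step12 : (#|Zs| <= \sum_c #|Uk c| * #|Vk c|)%N.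
Proof.
rewrite (card_part Zs kap); apply: leq_sum => c _.
have inj : {in [set x in Zs | kap x == c] &, injective (fun x => (aF x, bF x))}.
  by move=> x y _ _ [] /aFbF_inj.
rewrite -(card_in_imset inj) -cardsX; apply: subset_leq_card.
apply/subsetP => p /imsetP [x Hx ->]; move: Hx; rewrite inE => /andP [Hx Hc].
rewrite !inE /= kap_aF kap_bF Hc /= !andbT !imset_f //.
Qed.

Definition PU := [set p in setX Ua Ua | kap p.1 == kap p.2].
Definition PV := [set p in setX Vb Vb | kap p.1 == kap p.2].

Lemma PU_sum : #|PU| = (\sum_c #|Uk c| ^ 2)%N.
Proof. exact: card_pairs. Qed.
Lemma PV_sum : #|PV| = (\sum_c #|Vk c| ^ 2)%N.
Proof. exact: card_pairs. Qed.

Definition phi (p : F * F) : F * T :=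
  (@mk T n (fun t => if (t <= k)%N then at_ p.1 t.+1 else at_ p.2 (n.+1 - t)),
   at_ p.1 0).

Definition T1 : {set F * T} := [set q : F * T | [&& is_hom_cycle e q.1,
  at_ q.1 0 \in Y2, q.2 \in Y1, e (at_ q.1 0) q.2 &
  [exists t : 'I_k, sim (at_ q.1 t, at_ q.1 t.+1) (q.2, at_ q.1 0)]]].

Lemma ZsP x : x \in Zs -> [/\ forall t, e (at_ x t) (at_ x t.+1), at_ x 0 \in Y1,
  at_ x 1 \in Y2 & exists d : 'I_k, sim (at_ x 0, at_ x 1) (at_ x d.+1, at_ x d.+2)].
Proof.
rewrite inE => /and4P [/homP h1 h2 h3 /existsP h4]; split => //.
Qed.

Ltac lt := try (by lia).
Ltac simp_if := repeat match goal with |- context [if ?c then _ else _] =>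
  (have -> : c = true by lia) || (have -> : c = false by lia) end.

Lemma Ua_mask a t : a \in Ua -> (k.+1 < t < n)%N -> at_ a t = at_ a 0.
Proof. by move=> /imsetP [x _ ->]; apply: aF_hi. Qed.

Lemma kapE a b : kap a = kap b -> forall t, (t == 0)%N || (t == 1)%N || (t == k.+1) ->
  at_ a t = at_ b t.
Proof. by case=> h0 h1 h2 t /orP [/orP [] | ] /eqP ->. Qed.

Lemma PU_T1 : (#|PU| <= #|T1|)%N.
Proof.
have inj : {in PU &, injective phi}.
  move=> [a a'] [b b']; rewrite !inE /= => /andP [/andP [Ha Ha'] /eqP hka]
     /andP [/andP [Hb Hb'] /eqP hkb] [hw h0].
  have hg : forall t, (t < n)%N -> (if (t <= k)%N then at_ a t.+1 else at_ a' (n.+1 - t))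
     = (if (t <= k)%N then at_ b t.+1 else at_ b' (n.+1 - t)).
    by move=> t ht; have := congr1 (fun z => at_ z t) hw; rewrite /= !at_mk_lt.
  have eab : a = b.
    apply: (@ffun_at_eq _ _ npos) => t ht.
    case: (posnP t) => [-> // | tp].
    case: (leqP t k.+1) => h.
      have := hg t.-1; rewrite ifT; lt; rewrite ifT; lt.
      by rewrite prednK //; apply; lia.
    by rewrite (Ua_mask Ha) ?(Ua_mask Hb) ?h0 //; apply/andP; split.
  congr (_, _) => //.
  have hk' : kap a' = kap b' by rewrite -hka -hkb eab.
  apply: (@ffun_at_eq _ _ npos) => t ht.
  case: (boolP ((t == 0)%N || (t == 1)%N || (t == k.+1))) => [ht0|ht0].
    exact: kapE.
  case: (leqP t k) => h.
    have := hg (n.+1 - t); rewrite ifF; lt; rewrite ifF; lt.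
    have -> : (n.+1 - (n.+1 - t) = t)%N by lia.
    by apply; lia.
  have e0 := kapE hk' (t := 0) isT.
  by rewrite (Ua_mask Ha') ?(Ua_mask Hb') //; apply/andP; split; lia.
rewrite -(card_in_imset inj); apply: subset_leq_card.
apply/subsetP => q /imsetP [[a a'] Hp ->].
move: Hp; rewrite !inE /= => /andP [/andP [/imsetP [x Hx ->] /imsetP [x' Hx' ->]]].
rewrite !kap_aF => /eqP hk.
have [hx1 hx2 hx3 [d hd]] := ZsP Hx.
have [hx1' hx2' hx3' _] := ZsP Hx'.
have [h0 h1 hk1] : [/\ at_ x 0 = at_ x' 0, at_ x 1 = at_ x' 1 & at_ x k.+1 = at_ x' k.+1].
  by case: hk.
apply/and5P; split.
- apply: (@hom_mk _ _ npos) => [t ht|].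
    case: (leqP t.+1 k) => h1'.
      simp_if; rewrite !aF_lo; lt; exact: hx1.
    case: (leqP t k) => h2.
      have -> : t = k by lia.
      simp_if; rewrite !aF_lo; lt.
      have -> : (n.+1 - k.+1 = k)%N by lia.
      by rewrite hk1 esym.
    simp_if; rewrite !aF_lo; lt.
    have -> : (n.+1 - t = (n - t).+1)%N by lia.
    by rewrite esym.
  simp_if; rewrite !aF_lo; lt.
  have -> : (n.+1 - n.-1 = 2)%N by lia.
  by rewrite h1 esym.
- by rewrite at_mk_lt; lt; simp_if; rewrite aF_lo.
- by rewrite /= aF_lo.
- by rewrite /= at_mk_lt; lt; simp_if; rewrite !aF_lo // esym.
- apply/existsP; exists d; have hdk := ltn_ord d; rewrite /= !(@at_mk_lt _ _ npos _ 0) ?(@at_mk_lt _ _ npos _ d) ?(@at_mk_lt _ _ npos _ d.+1); lt; simp_if.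
  by rewrite !aF_lo; lt; rewrite ssym.
Qed.


Local Notation n' := (2 * k - 2)%N.
Lemma npos' : (0 < n')%N. Proof. lia. Qed.
Local Notation at' := (@A.at_ _ _ npos').
Local Notation F' := {ffun 'I_n' -> T}.

Definition psi (p : F * F) : F' * T :=
  (@mk T n' (fun t => if (t <= k.-1)%N then at_ p.1 (k.+1 + t)
                      else at_ p.2 (3 * k - 1 - t)), at_ p.1 1).

Definition T2 : {set F' * T} := [set q : F' * T | [&& is_hom_cycle e q.1,
  at' q.1 k.-1 \in Y1, q.2 \in Y2 & e (at' q.1 k.-1) q.2]].

Lemma Vb_mask b t : b \in Vb -> (1 < t <= k)%N -> at_ b t = at_ b 0.
Proof. by move=> /imsetP [x _ ->]; apply: bF_mid. Qed.

Lemma PV_T2 : (#|PV| <= #|T2|)%N.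
Proof.
have inj : {in PV &, injective psi}.
  move=> [a a'] [b b']; rewrite !inE /= => /andP [/andP [Ha Ha'] /eqP hka]
     /andP [/andP [Hb Hb'] /eqP hkb] [hw h1].
  have hg : forall t, (t < n')%N ->
     (if (t <= k.-1)%N then at_ a (k.+1 + t) else at_ a' (3 * k - 1 - t))
     = (if (t <= k.-1)%N then at_ b (k.+1 + t) else at_ b' (3 * k - 1 - t)).
    by move=> t ht; have := congr1 (fun z => at' z t) hw; rewrite /= !at_mk_lt.
  have h0 : at_ a 0 = at_ b 0.
    have := hg k.-1; simp_if; have -> : (k.+1 + k.-1 = n)%N by lia.
    by rewrite !at_n; apply; lia.
  have eab : a = b.
    apply: (@ffun_at_eq _ _ npos) => t ht.
    case: (posnP t) => [-> // | tp].
    case: (ltnP 1 t) => h1t; last by have -> : t = 1%N by lia.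
    case: (leqP t k) => h.
      by rewrite (Vb_mask Ha) ?(Vb_mask Hb) ?h0 //; apply/andP; split.
    have := hg (t - k.+1); simp_if; have -> : (k.+1 + (t - k.+1) = t)%N by lia.
    by apply; lia.
  congr (_, _) => //.
  have hk' : kap a' = kap b' by rewrite -hka -hkb eab.
  apply: (@ffun_at_eq _ _ npos) => t ht.
  case: (boolP ((t == 0)%N || (t == 1)%N || (t == k.+1))) => [ht0|ht0].
    exact: kapE.
  case: (leqP t k) => h.
    have e0 := kapE hk' (t := 0) isT.
    by rewrite (Vb_mask Ha') ?(Vb_mask Hb') //; apply/andP; split; lia.
  have := hg (3 * k - 1 - t); simp_if.
  have -> : (3 * k - 1 - (3 * k - 1 - t) = t)%N by lia.
  by apply; lia.
rewrite -(card_in_imset inj); apply: subset_leq_card.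
apply/subsetP => q /imsetP [[a a'] Hp ->].
move: Hp; rewrite !inE /= => /andP [/andP [/imsetP [x Hx ->] /imsetP [x' Hx' ->]]].
rewrite !kap_bF => /eqP hk.
have [hx1 hx2 hx3 _] := ZsP Hx.
have [hx1' hx2' hx3' _] := ZsP Hx'.
have [h0 h1 hk1] : [/\ at_ x 0 = at_ x' 0, at_ x 1 = at_ x' 1 & at_ x k.+1 = at_ x' k.+1].
  by case: hk.
have bx : forall t, ((t <= 1) || (k.+1 <= t <= n))%N -> at_ (bF x) t = at_ x t.
  by move=> t; apply: bF_ok.
have bx' : forall t, ((t <= 1) || (k.+1 <= t <= n))%N -> at_ (bF x') t = at_ x' t.
  by move=> t; apply: bF_ok.
have hn : at_ x n = at_ x' n by rewrite !at_n.
apply/and4P; split.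
- apply: (@hom_mk _ _ npos') => [t ht|].
    case: (leqP t.+1 k.-1) => h1'.
      simp_if; rewrite !bx; lt.
      by have -> : (k.+1 + t.+1 = (k.+1 + t).+1)%N by lia.
    case: (leqP t k.-1) => h2.
      simp_if; rewrite !bx; lt.
      have -> : (k.+1 + t = n)%N by lia.
      have -> : (3 * k - 1 - t.+1 = n.-1)%N by lia.
      by rewrite bx'; lt; rewrite hn esym; have := hx1' n.-1; rewrite prednK //; lia.
    simp_if; rewrite !bx'; lt.
    have -> : (3 * k - 1 - t = (3 * k - 1 - t.+1).+1)%N by lia.
    by rewrite esym.
  case: (leqP (n'.-1) k.-1) => h.
    simp_if; rewrite !bx; lt.
    have -> : (k.+1 + n'.-1 = n)%N by lia.
    have -> : (k.+1 + 0 = n.-1)%N by lia.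
    by rewrite esym; have := hx1 n.-1; rewrite prednK //; lia.
  simp_if; rewrite bx' ?bx; lt.
  have -> : (3 * k - 1 - n'.-1 = (k.+1).+1)%N by lia.
  by rewrite addn0 hk1 esym.
- rewrite at_mk_lt; lt; simp_if; rewrite bx; lt.
  have -> : (k.+1 + k.-1 = n)%N by lia.
  by rewrite at_n.
- by rewrite /= bx.
- rewrite /= at_mk_lt; lt; simp_if; rewrite !bx; lt.
  have -> : (k.+1 + k.-1 = n)%N by lia.
  by rewrite at_n; have := hx1 0.
Qed.

Section Bounds.
Variable R : rcfType.
Local Open Scope ring_scope.

Lemma sum_hom_le (m : nat) (c : R) (f : {ffun 'I_m -> T} -> R) :
  (forall w, is_hom_cycle e w -> f w <= c) -> (forall w, ~~ is_hom_cycle e w -> f w = 0) ->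
  \sum_w f w <= c * (hom_cycle e m)%:R.
Proof.
move=> h1 h2; rewrite (bigID (fun w => is_hom_cycle e w)) /=.
rewrite [X in _ + X]big1 ?addr0; last by move=> w hw; apply: h2.
apply: le_trans (ler_sum _ (fun w hw => h1 w hw)) _.
rewrite (eq_bigl (fun w => w \in [set x | is_hom_cycle e x])); last by move=> w; rewrite inE.
by rewrite sumr_const /hom_cycle mulr_natr.
Qed.

Lemma T1_bound (s : R) (s0 : 0 <= s)
  (hs : forall u v w, w \in Y2 ->
     (#|[set z in Y1 | e w z && sim (u, v) (z, w)]|)%:R <= s) :
  (#|T1|)%:R <= (k%:R * s) * (hom_cycle e n)%:R.
Proof.
rewrite /T1 (card_pair_fib (fun (w : F) (z : T) => [&& is_hom_cycle e w,
  at_ w 0 \in Y2, z \in Y1, e (at_ w 0) z &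
  [exists t : 'I_k, sim (at_ w t, at_ w t.+1) (z, at_ w 0)]])).
rewrite natr_sum; apply: sum_hom_le => w hw; last first.
  rewrite (_ : [set z | _] = set0) ?cards0 //; apply/setP => z.
  by rewrite !inE (negbTE hw).
case: (boolP (at_ w 0 \in Y2)) => hY; last first.
  rewrite (_ : [set z | _] = set0) ?cards0 ?mulr_ge0 //; apply/setP => z.
  by rewrite !inE /= andbF.
apply: (@le_trans _ _ ((\sum_(t : 'I_k) #|[set z in Y1 |
    e (at_ w 0) z && sim (at_ w t, at_ w t.+1) (z, at_ w 0)]|)%:R)).
  rewrite ler_nat.
  have H := card_exists_le (fun (t : 'I_k) z => (z \in Y1) &&
    (e (at_ w 0) z && sim (at_ w t, at_ w t.+1) (z, at_ w 0))).
  apply: leq_trans H.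
  apply: subset_leq_card; apply/subsetP => z; rewrite !inE hw /=.
  case/and3P => h1 h2 /existsP [t ht]; apply/existsP; exists t.
  by rewrite h1 h2.
rewrite natr_sum; apply: le_trans (ler_sum _ (fun t _ => hs _ _ _ hY)) _.
by rewrite sumr_const card_ord mulr_natl.
Qed.

Lemma T2_bound (D : R) (D0 : 0 <= D)
  (hD : forall w, w \in Y1 -> (#|[set z in Y2 | e w z]|)%:R <= D) :
  (#|T2|)%:R <= D * (hom_cycle e n')%:R.
Proof.
rewrite /T2 (card_pair_fib (fun (w : F') (z : T) => [&& is_hom_cycle e w,
  at' w k.-1 \in Y1, z \in Y2 & e (at' w k.-1) z])).
rewrite natr_sum; apply: sum_hom_le => w hw; last first.
  rewrite (_ : [set z | _] = set0) ?cards0 //; apply/setP => z.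
  by rewrite !inE (negbTE hw).
case: (boolP (at' w k.-1 \in Y1)) => hY; last first.
  rewrite (_ : [set z | _] = set0) ?cards0 //; apply/setP => z.
  by rewrite !inE /= andbF.
apply: le_trans (hD _ hY); rewrite ler_nat; apply: subset_leq_card.
by apply/subsetP => z; rewrite !inE hw.
Qed.

Lemma Zs_bound (D s : R)
  (hD : forall w, w \in Y1 -> (#|[set z in Y2 | e w z]|)%:R <= D)
  (hs : forall u v w, w \in Y2 ->
     (#|[set z in Y1 | e w z && sim (u, v) (z, w)]|)%:R <= s) :
  (#|Zs|)%:R <= Num.sqrt (k%:R * (D * s) * (hom_cycle e n')%:R * (hom_cycle e n)%:R).
Proof.
case: (set_0Vmem Zs) => [-> | [x Hx]]; first by rewrite cards0 sqrtr_ge0.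
have [_ hx2 hx3 _] := ZsP Hx.
have D0 : 0 <= D by apply: le_trans (hD _ hx2).
have s0 : 0 <= s by apply: le_trans (hs (at_ x 0) (at_ x 0) _ hx3).
set u := fun c => (#|Uk c|)%:R : R.
set v := fun c => (#|Vk c|)%:R : R.
have h1 : (#|Zs|)%:R <= \sum_c u c * v c.
  by rewrite /u /v; under eq_bigr => c _ do rewrite -natrM; rewrite -natr_sum ler_nat step12.
have h2 : \sum_c u c ^+ 2 = (#|PU|)%:R.
  by rewrite PU_sum natr_sum; apply: eq_bigr => c _; rewrite natrX.
have h3 : \sum_c v c ^+ 2 = (#|PV|)%:R.
  by rewrite PV_sum natr_sum; apply: eq_bigr => c _; rewrite natrX.
rewrite -[X in X <= _]ger0_norm ?ler0n // -sqrtr_sqr ler_wsqrtr //.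
apply: le_trans (_ : (\sum_c u c * v c) ^+ 2 <= _).
  by rewrite ler_pXn2r ?nnegrE ?ler0n //; apply: le_trans h1.
apply: le_trans (CS u v) _; rewrite h2 h3.
apply: le_trans (_ : (#|T1|)%:R * (#|T2|)%:R <= _).
  by rewrite -!natrM ler_nat leq_mul ?PU_T1 ?PV_T2.
apply: le_trans (_ : ((k%:R * s) * (hom_cycle e n)%:R) * (D * (hom_cycle e n')%:R) <= _).
  apply: ler_pM; rewrite ?ler0n //; first exact: T1_bound.
  exact: T2_bound.
by rewrite le_eqVlt; apply/orP; left; apply/eqP; ring.
Qed.

End Bounds.

End Main.

End Aux.
Import Aux. Import Aux.A.

Local Open Scope ring_scope.

Theorem lemma2p5 (R : rcfType) (k : nat) (T : finType) (e : rel T)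
    (X1 X2 : {set T}) (sim : T * T -> T * T -> bool)
    (D1 D2 s1 s2 : R) :
  (2 <= k)%N ->
  symmetric e -> irreflexive e ->
  (forall p q, sim p q = sim q p) ->
  (forall (u v w : T), w \in X1 ->
     (#|[set z in X2 | e w z]|%:R <= D1) /\
     (#|[set z in X2 | e w z && sim (u, v) (z, w)]|%:R <= s1)) ->
  (forall (u v w : T), w \in X2 ->
     (#|[set z in X1 | e w z]|%:R <= D2) /\
     (#|[set z in X1 | e w z && sim (u, v) (z, w)]|%:R <= s2)) ->
  #|bad_cycles e X1 X2 sim (2 * k)|%:R
    <= (32 * k)%:R * Num.sqrt (k%:R * Num.max (D1 * s2) (D2 * s1)
                     * (hom_cycle e (2 * k - 2))%:R * (hom_cycle e (2 * k))%:R).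
Proof.
move=> k2 esym _ ssym ha hb.
pose np := npos k2.
set Z12 := Zs e X1 X2 sim k2.
set Z21 := Zs e X2 X1 sim k2.
set W := Z12 :|: Z21.
set H1 := (hom_cycle e (2 * k - 2))%:R : R.
set H2 := (hom_cycle e (2 * k))%:R : R.
set M := Num.max (D1 * s2) (D2 * s1).
have b12 : (#|Z12|)%:R <= Num.sqrt (k%:R * (D1 * s2) * H1 * H2).
  apply: Zs_bound => //.
    by move=> w hw; have [] := ha w w w hw.
  by move=> u v w hw; have [] := hb u v w hw.
have b21 : (#|Z21|)%:R <= Num.sqrt (k%:R * (D2 * s1) * H1 * H2).
  apply: Zs_bound => //.
    by move=> w hw; have [] := hb w w w hw.
  by move=> u v w hw; have [] := ha u v w hw.
have key : forall x, x \in bad_cycles e X1 X2 sim (2 * k) ->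
    [exists i : 'I_(2 * k), A.rot np i x \in W].
  move=> x; rewrite inE => /and3P [hh halt /existsP [i /existsP [j /andP [hij hs]]]].
  rewrite (at_succ np) (at_succ np) -(at_val np x i) -(at_val np x j) in hs.
  have hh' := (homP np e x hh).
  have memb : forall r d, (r < 2 * k)%N -> (1 <= d <= k)%N ->
      sim (at_ np x r, at_ np x r.+1) (at_ np x (d + r), at_ np x (d + r).+1) ->
      [exists i : 'I_(2 * k), A.rot np i x \in W].
    move=> r d hr hd hsd; apply/existsP; exists (Ordinal hr); rewrite /W inE /=.
    have ev : ~~ odd (2 * k) by rewrite oddM.
    case/orP: halt => ha'.
      have A0 := alt_at np ev ha' r; have A1 := alt_at np ev ha' r.+1.
      rewrite /= in A1; case: (odd r) A0 A1 => /= A0 A1.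
        by apply/orP; right; rewrite /Z21; exact: rot_Zs hh' A0 A1 hd hsd.
      by apply/orP; left; rewrite /Z12; exact: rot_Zs hh' A0 A1 hd hsd.
    have A0 := alt_at np ev ha' r; have A1 := alt_at np ev ha' r.+1.
    rewrite /= in A1; case: (odd r) A0 A1 => /= A0 A1.
      by apply/orP; left; rewrite /Z12; exact: rot_Zs hh' A0 A1 hd hsd.
    by apply/orP; right; rewrite /Z21; exact: rot_Zs hh' A0 A1 hd hsd.
  have gen : forall a b : 'I_(2 * k), (a < b)%N ->
      sim (at_ np x a, at_ np x a.+1) (at_ np x b, at_ np x b.+1) ->
      [exists i : 'I_(2 * k), A.rot np i x \in W].
    move=> a b hab hs'; have ha2 := ltn_ord a; have hb2 := ltn_ord b.
    case: (leqP (b - a)%N k) => hd.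
      apply: (memb a (b - a)%N) => //; first lia.
      by have -> : (b - a + a = b)%N by lia.
    apply: (memb b (2 * k - (b - a))%N) => //; first lia.
    have E0 : at_ np x (2 * k - (b - a) + b)%N = at_ np x a.
      apply: at_eqmod; have -> : (2 * k - (b - a) + b = a + 2 * k)%N by lia.
      by rewrite modnDr.
    have E1 : at_ np x (2 * k - (b - a) + b)%N.+1 = at_ np x a.+1.
      apply: at_eqmod; have -> : ((2 * k - (b - a) + b).+1 = a.+1 + 2 * k)%N by lia.
      by rewrite modnDr.
    by rewrite E0 E1 ssym.
  case: (ltngtP i j) => hl.
  - exact: gen hl hs.
  - by apply: gen hl _; rewrite ssym.
  - by move: hij; rewrite (val_inj hl) eqxx.
have card1 : (#|bad_cycles e X1 X2 sim (2 * k)| <= 2 * k * (#|Z12| + #|Z21|))%N.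
  apply: (@leq_trans #|[set x | [exists i : 'I_(2 * k), A.rot np i x \in W]]|).
    by apply: subset_leq_card; apply/subsetP => x /key; rewrite inE.
  apply: leq_trans (card_exists_le (fun (i : 'I_(2 * k)) x => A.rot np i x \in W)) _.
  have -> : (\sum_(i : 'I_(2 * k)) #|[set x | A.rot np i x \in W]| = \sum_(i : 'I_(2 * k)) #|W|)%N.
    apply: eq_bigr => i _.
    rewrite -[RHS](card_preimset _ (@A.rot_inj _ _ np i)); apply: eq_card => y; by rewrite !inE.
  rewrite sum_nat_const card_ord leq_mul2l; apply/orP; right.
  by rewrite cardsU leq_subr.
set Sm := Num.sqrt (k%:R * M * H1 * H2).
have Sm0 : 0 <= Sm by apply: sqrtr_ge0.
have H10 : 0 <= H1 by apply: ler0n.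
have H20 : 0 <= H2 by apply: ler0n.
have le1 : Num.sqrt (k%:R * (D1 * s2) * H1 * H2) <= Sm.
  apply: ler_wsqrtr; apply: ler_wpM2r => //; apply: ler_wpM2r => //.
  by apply: ler_wpM2l => //; rewrite le_max lexx.
have le2 : Num.sqrt (k%:R * (D2 * s1) * H1 * H2) <= Sm.
  apply: ler_wsqrtr; apply: ler_wpM2r => //; apply: ler_wpM2r => //.
  by apply: ler_wpM2l => //; rewrite le_max lexx orbT.
apply: le_trans (_ : (2 * k * (#|Z12| + #|Z21|))%:R <= _); first by rewrite ler_nat.
rewrite natrM natrD.
apply: le_trans (_ : (2 * k)%:R * (Sm + Sm) <= _).
  apply: ler_wpM2l; first exact: ler0n.
  by apply: lerD; [apply: le_trans b12 le1 | apply: le_trans b21 le2].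
have -> : (2 * k)%:R * (Sm + Sm) = (4 * k)%:R * Sm :> R.
  by rewrite !natrM; ring.
by apply: ler_wpM2r => //; rewrite ler_nat; lia.
Qed.
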